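(* For integers $n\ge1$ and $k>\ell\ge1$, $\mu^{\{0,1\}}_{k,\ell}(\mathbb{Z}/n\mathbb{Z})\le\left\lfloor\frac{n}{k+\ell}\right\rfloor$.
   Context: For subsets $X,Y$ of an abelian group, $X+Y=\{x+y: x\in X, y\in Y\}$, and for an integer $j\ge 1$, $jX=X+\dots+X$ ($j$ copies); $0X=\{0\}$. For $A,C\subseteq \mathbb{Z}/n\mathbb{Z}$ and an integer $j\ge 1$, define $j *_C A = jA+(j-1)C$. A set $A\subseteq\mathbb{Z}/n\mathbb{Z}$ is $C$-$(k,\ell)$-sum-free if $(k *_C A)\cap(\ell *_C A)=\emptyset$. $\mu^C_{k,\ell}(\mathbb{Z}/n\mathbb{Z})$ denotes the maximum size of a $C$-$(k,\ell)$-sum-free subset of $\mathbb{Z}/n\mathbb{Z}$. *)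

(* Defs.v *)
(* Z/nZ is modelled as 'I_n with addition mod n, which is
   valid for every n >= 1 (including n = 1, where 'Z_n would be wrong). *)
From mathcomp Require Import all_boot.
Set Implicit Arguments. Unset Strict Implicit. Unset Printing Implicit Defensive.

Definition sumset (n : nat) (X Y : {set 'I_n}) : {set 'I_n} :=
  [set z : 'I_n | [exists x in X, exists y in Y, (z : nat) == (x + y) %% n]].

Definition zeroset (n : nat) : {set 'I_n} := [set z : 'I_n | (z : nat) == 0 %% n].

Definition nfold (n : nat) (j : nat) (X : {set 'I_n}) : {set 'I_n} :=
  iter j (sumset X) (zeroset n).

(* j *_C A = jA + (j-1)C  (used for j >= 1) *)
Definition starC (n : nat) (C : {set 'I_n}) (j : nat) (A : {set 'I_n}) : {set 'I_n} :=
  sumset (nfold j A) (nfold j.-1 C).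

Definition sum_free (n : nat) (C : {set 'I_n}) (k l : nat) (A : {set 'I_n}) : bool :=
  (starC C k A :&: starC C l A) == set0.

Definition mu (n : nat) (C : {set 'I_n}) (k l : nat) : nat :=
  \max_(A : {set 'I_n} | sum_free C k l A) #|A|.

Definition C01 (n : nat) : {set 'I_n} :=
  [set z : 'I_n | ((z : nat) == 0 %% n) || ((z : nat) == 1 %% n)].

(* Main.v *)
Require Import Defs.
From mathcomp Require Import all_boot.
From mathcomp Require Import ssralg finalg zmodp zify.
Set Implicit Arguments. Unset Strict Implicit. Unset Printing Implicit Defensive.
Import GRing.Theory.

Section Gen.
Variable G : finZmodType.
Local Open Scope ring_scope.

Definition ss (X Y : {set G}) : {set G} := [set x + y | x in X, y in Y].

Lemma card_tr (e : G) (A : {set G}) : #|[set b + e | b in A]| = #|A|.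
Proof. by apply: card_imset; apply: addIr. Qed.

Variable c : G.
Hypothesis hc : forall X : {set G}, X != set0 -> [set x + c | x in X] \subset X -> X = setT.
Definition CC : {set G} := [set 0; c].

Lemma key N : forall (A X : {set G}), (#|A| <= N)%N -> A != set0 -> X != set0 ->
  (minn #|G| (#|X| + #|A|) <= #|ss (ss X A) CC|)%N.
Proof.
elim: N => [|N IH] A X hA nA nX.
  by move: nA; rewrite -card_gt0; case: #|A| hA.
case: (boolP [exists x in X, exists a in A, exists b in A, (b + (x - a)) \notin X]).
- case/exists_inP => x xX /exists_inP [a aA] /exists_inP [b bA] bN.
  set e := x - a.
  set A' := A :&: [set y | y + e \in X].
  set X' := X :|: [set y + e | y in A].
  have aA' : a \in A' by rewrite !inE aA /e addrC subrK.
  have bA' : b \notin A' by rewrite !inE (negbTE bN) andbF.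
  have sA : A' \proper A.
    apply/properP; split; first exact: subsetIl.
    by exists b.
  have hA' : (#|A'| <= N)%N.
    by rewrite -ltnS; apply: leq_trans hA; apply: proper_card.
  have nA' : A' != set0 by apply/set0Pn; exists a.
  have nX' : X' != set0 by apply/set0Pn; exists x; rewrite inE xX.
  have eqI : X :&: [set y + e | y in A] = [set y + e | y in A'].
    apply/setP => z; apply/idP/idP.
      case/setIP => zX /imsetP [y yA Hz]; subst z; apply/imsetP; exists y => //.
      by rewrite !inE yA zX.
    case/imsetP => y; rewrite !inE => /andP [yA yX] ->.
    by rewrite yX; apply/imsetP; exists y.
  have hc' : (#|X'| + #|A'| = #|X| + #|A|)%N.
    have := cardsUI X [set y + e | y in A].
    by rewrite eqI !card_tr.
  have := IH A' X' hA' nA' nX'; rewrite hc' => H; apply: leq_trans H _.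
  apply: subset_leq_card; apply/subsetP => z /imset2P [w c0 /imset2P [x1 y1 x1X y1A ->] cC ->].
  apply/imset2P; exists (x1 + y1) c0 => //.
  move: y1A; rewrite !inE => /andP [y1A y1X].
  case/setUP: x1X => [x1X | /imsetP [b1 b1A ->]].
    by apply/imset2P; exists x1 y1.
  apply/imset2P; exists (y1 + e) b1 => //.
  by rewrite [b1 + e]addrC addrAC [e + y1]addrC.
- rewrite negb_exists_in => /forall_inP stab.
  have stab' : forall x a b, x \in X -> a \in A -> b \in A -> b + (x - a) \in X.
    move=> x a b xX aA bA; have := stab x xX.
    rewrite negb_exists_in => /forall_inP /(_ a aA).
    by rewrite negb_exists_in => /forall_inP /(_ b bA); rewrite negbK.
  case/set0Pn: nA => a0 a0A.
  have sub1 : [set w + a0 | w in X] \subset ss (ss X A) CC.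
    apply/subsetP => z /imsetP [w wX ->]; apply/imset2P; exists (w + a0) 0.
    - by apply/imset2P; exists w a0.
    - by rewrite !inE eqxx.
    - by rewrite addr0.
  case: (boolP (X == setT)) => [/eqP XT | XnT].
    apply: leq_trans (geq_minl _ _) _.
    by rewrite -cardsT -XT -(card_tr a0 X); apply: subset_leq_card.
  have [y yXc yX] : exists2 y, y \in [set x + c | x in X] & y \notin X.
    case: (boolP ([set x + c | x in X] \subset X)) => [/(hc nX) H|].
      by rewrite H eqxx in XnT.
    by case/subsetPn => y ? ?; exists y.
  apply: leq_trans (geq_minr _ _) _.
  set Y := [set y + (b - a0) | b in A].
  have cY : #|Y| = #|A|.
    by apply: card_imset => u v /addrI /addIr.
  have dis : X :&: Y = set0.
    apply/setP => z; rewrite !inE; apply/negP => /andP [zX /imsetP [b bA Hz]].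
    have := stab' z b a0 zX bA a0A; rewrite Hz.
    by rewrite addrAC -(addrA y) addKr addrCA subrr addr0 (negbTE yX).
  have := cardsUI X Y; rewrite dis cards0 addn0 cY => <-.
  rewrite -(card_tr a0); apply: subset_leq_card; apply/subsetP => z /imsetP [w].
  case/setUP => [wX ->| /imsetP [b bA ->] ->].
    by apply: (subsetP sub1); apply/imsetP; exists w.
  case/imsetP: yXc => x1 x1X ->.
  apply/imset2P; exists (x1 + b) c.
  - by apply/imset2P; exists x1 b.
  - by rewrite !inE eqxx orbT.
  - by rewrite -(addrA (x1 + c)) subrK addrAC.
Qed.
End Gen.

Lemma arith1 (n p a y s t : nat) : minn n p <= y -> minn n (y + a) <= s -> s <= t -> minn n (a + p) <= t.
Proof. lia. Qed.

Lemma arith2 (n P Q s t : nat) : 0 < n -> minn n P <= s -> minn n Q <= t -> s + t <= n -> 0 < P -> 0 < Q -> P + Q <= n.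
Proof. move=> h0; rewrite /minn; case: ltnP => h1; case: ltnP => h2; lia. Qed.

Section Conc.
Variable m : nat.
Local Notation G := ('I_m.+1 : finZmodType).
Local Notation c1 := (inZp 1 : 'I_m.+1).

Lemma sumsetE (X Y : {set 'I_m.+1}) : sumset X Y = ss X Y.
Proof.
apply/setP => z; rewrite inE; apply/existsP/imset2P.
  case=> x /andP [xX /existsP [y /andP [yY /eqP h]]].
  by exists x y => //; apply: val_inj.
case=> x y xX yY ->; exists x; rewrite xX; apply/existsP; exists y.
by apply/andP; split.
Qed.

Lemma zerosetE : zeroset m.+1 = [set 0%R : G].
Proof.
apply/setP => z; rewrite !inE; apply/eqP/eqP => [h|->] //.
by apply: val_inj.
Qed.

Lemma C01E : C01 m.+1 = CC c1.
Proof.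
apply/setP => z; rewrite !inE.
congr (_ || _); apply/eqP/eqP => [h|->] //; by apply: val_inj.
Qed.

Lemma ss0 (X : {set G}) : ss X [set 0%R] = X.
Proof.
apply/setP => z; apply/imset2P/idP.
  by case=> x y xX; rewrite inE => /eqP -> ->; rewrite GRing.addr0.
by move=> zX; exists z 0%R; rewrite ?inE ?GRing.addr0.
Qed.

Lemma cm i : val (c1 *+ i)%R = (i %% m.+1)%N.
Proof. elim: i => [|i IH]; first by rewrite GRing.mulr0n.
by rewrite GRing.mulrSr /= IH modnDm addn1. Qed.

Lemma hcZ (X : {set G}) : X != set0 -> [set (x + c1)%R | x in X] \subset X -> X = setT.
Proof.
case/set0Pn => x xX sub.
have H : forall i, (x + c1 *+ i)%R \in X.
  elim=> [|i IH]; first by rewrite GRing.mulr0n GRing.addr0.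
  rewrite GRing.mulrSr GRing.addrA; apply: (subsetP sub); apply/imsetP.
  by exists (x + c1 *+ i)%R.
apply/setP => z; rewrite inE.
have -> : z = (x + c1 *+ val (z - x)%R)%R.
  have -> : (c1 *+ val (z - x)%R)%R = (z - x)%R.
    by apply: val_inj; rewrite cm modn_small // ltn_ord.
  by rewrite GRing.addrC GRing.subrK.
exact: H.
Qed.

Lemma bound (A : {set G}) j : A != set0 ->
  (minn m.+1 (j.+1 * #|A|) <= #|starC (C01 m.+1) j.+1 A|)%N.
Proof.
move=> nA; elim: j => [|j IH].
  rewrite /starC /nfold /= !sumsetE zerosetE !ss0 mul1n.
  exact: geq_minr.
have nY : starC (C01 m.+1) j.+1 A != set0.
  rewrite -card_gt0; apply: leq_trans IH.
  move: nA; rewrite -card_gt0; lia.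
have K := key hcZ (leqnn #|A|) nA nY.
rewrite card_ord in K.
have S : ss (ss (starC (C01 m.+1) j.+1 A) A) (CC c1) \subset starC (C01 m.+1) j.+2 A.
  have E1 : nfold j.+2 A = sumset A (nfold j.+1 A) by [].
  have E2 : nfold j.+1 (C01 m.+1) = sumset (C01 m.+1) (nfold j (C01 m.+1)) by [].
  rewrite /starC (_ : j.+2.-1 = j.+1) // (_ : j.+1.-1 = j) // E1 E2.
  rewrite !sumsetE C01E.
  apply/subsetP => z /imset2P [w c0 /imset2P [y a /imset2P [s t sS tT ->] aA ->] cC ->].
  apply/imset2P; exists (a + s)%R (c0 + t)%R.
  - by apply/imset2P; exists a s.
  - by apply/imset2P; exists c0 t.
  - by rewrite (GRing.addrC c0) GRing.addrAC GRing.addrC !GRing.addrA.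
rewrite (mulSn j.+1); move/subset_leq_card: S; move: IH K; exact: arith1.
Qed.
End Conc.

Theorem theorem3p2 (n k l : nat) (hn : 1 <= n) (hl : 1 <= l) (hlk : l < k) :
  mu (C01 n) k l <= n %/ (k + l).
Proof.
case: n hn => [//|m] _.
case: k hlk => [//|k'] hlk; case: l hl hlk => [//|l'] _ hlk.
apply/bigmax_leqP => A sf.
case: (boolP (A == set0)) => [/eqP -> | nA]; first by rewrite cards0.
have Bk := bound k' nA; have Bl := bound l' nA.
have hd : #|starC (C01 m.+1) k'.+1 A :|: starC (C01 m.+1) l'.+1 A| <= m.+1.
  by apply: leq_trans (max_card _) _; rewrite card_ord.
move: hd; rewrite cardsU (eqP sf) cards0 subn0 => hd.
rewrite leq_divRL; last by [].
have a1 : 0 < #|A| by rewrite card_gt0.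
rewrite mulnDr ![#|A| * _]mulnC.
apply: arith2 Bk Bl hd _ _ => //; by rewrite muln_gt0 a1.
Qed.
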